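(* Let $\mathbb{F}_q$ have characteristic $p\ne2$, $f(X)=aX^2+c\in\mathbb{F}_q[X]$ with $a\neq0$, $r\ge 1$, $k\ge 2$. For every $(x_1,\dots,x_k)\in\overline{\mathbb{F}_q}^{\,k}$ with $f^r(x_1)=\dots=f^r(x_k)$ there exist a permutation $\sigma\in S_k$ and integers $d_1,\dots,d_{k-1}\in\{-1,0,\dots,r-1\}$ such that $\phi(x_{\sigma(i)},x_{\sigma(i+1)};d_i)=0$ for $1\le i\le k-1$, and such that for every $1\le s<t\le k-1$ the maximum of $d_s,\dots,d_t$ is either $-1$ or is attained at exactly one index.
   Context: Iterates: $f^0(X)=X$, $f^{j+1}(X)=f(f^j(X))$. Define $\phi(X,Y;-1)=X-Y$ and $\phi(X,Y;d)=f^d(X)+f^d(Y)$ for $d\ge0$. *)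

(* Defs.v *)
From HB Require Import structures.
From mathcomp Require Import all_boot all_order all_algebra all_fingroup all_field.
Set Implicit Arguments. Unset Strict Implicit. Unset Printing Implicit Defensive.
Import Order.TTheory GRing.Theory Num.Theory.
Local Open Scope ring_scope.

Definition quadf (L : fieldType) (a c : L) (x : L) : L := a * x ^+ 2 + c.

Definition fiter (L : fieldType) (a c : L) (d : nat) (x : L) : L :=
  iter d (quadf a c) x.

(* phi(X,Y;-1) = X - Y ; phi(X,Y;d) = f^d(X) + f^d(Y) for d >= 0.
   (Only d >= -1 is ever used; negative d other than -1 are excluded
   by the hypotheses of the theorem.) *)
Definition phi (L : fieldType) (a c : L) (x y : L) (d : int) : L :=
  match d with
  | Posz n => fiter a c n x + fiter a c n y
  | Negz _ => x - y
  end.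

Definition max_neg1_or_unique (d : nat -> int) (s t : nat) : Prop :=
  (forall i : nat, (s <= i <= t)%N -> d i = -1)
  \/ (exists j : nat, (s <= j <= t)%N /\
        forall i : nat, (s <= i <= t)%N -> i <> j -> d i < d j).

(* Main.v *)
Require Import Defs.
From HB Require Import structures.
From mathcomp Require Import all_boot all_order all_algebra all_fingroup all_field.
From mathcomp Require Import zify.
Import Order.TTheory GRing.Theory Num.Theory.
Local Open Scope ring_scope.

Section Aux.
Variables (L : fieldType) (a c : L).
Hypothesis ha : a != 0.

Lemma quad_eq (u w : L) : quadf a c u = quadf a c w -> u = w \/ u = - w.
Proof.
rewrite /quadf => /addIr/eqP; rewrite -subr_eq0 -mulrBr mulf_eq0 (negbTE ha) /=.
rewrite subr_sqr mulf_eq0 subr_eq0 addr_eq0 => /orP[]/eqP; by [left|right].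
Qed.

Lemma mx_ext (d d' : nat -> int) s t :
  (forall i, (s <= i <= t)%N -> d i = d' i) ->
  max_neg1_or_unique d s t -> max_neg1_or_unique d' s t.
Proof.
move=> E [H|[j [Hj H]]]; [left=> i Hi; rewrite -E // H // | right; exists j; split=> //].
move=> i Hi Hij; rewrite -!E //; exact: H.
Qed.

Lemma mx_shift (d : nat -> int) n s t :
  max_neg1_or_unique d s t ->
  max_neg1_or_unique (fun i => d (i - n)%N) (s + n) (t + n).
Proof.
move=> [H|[j [Hj H]]]; [left=> i Hi; apply: H; lia | right; exists (j + n)%N; split].
- lia.
- move=> i Hi Hij; rewrite addnK; apply: H; lia.
Qed.

Lemma main (I : eqType) (i0 : I) (x : I -> L) r (s : seq I) :
 (forall i j, i \in s -> j \in s -> fiter a c r (x i) = fiter a c r (x j)) ->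
 exists t (d : nat -> int), [/\ perm_eq s t,
   (forall i, (i.+1 < size t)%N -> -1 <= d i <= r%:Z - 1),
   (forall i, (i.+1 < size t)%N ->
       phi a c (x (nth i0 t i)) (x (nth i0 t i.+1)) (d i) = 0) &
   (forall s' t', (s' < t')%N -> (t'.+1 < size t)%N -> max_neg1_or_unique d s' t')].
Proof.
elim: r s => [|r IH] s hs.
  exists s, (fun _ => -1); split => //.
  - move=> i hi; rewrite /phi /=.
    have := hs (nth i0 s i) (nth i0 s i.+1) (mem_nth _ (ltnW hi)) (mem_nth _ hi).
    rewrite /fiter /= => ->; by rewrite subrr.
  - by move=> *; left.
case: s hs => [|x0 s'] hs.
  by exists [::], (fun _ => 0); split.
set s := x0 :: s' in hs *.
pose v := fiter a c r (x x0).
pose p := fun i => fiter a c r (x i) == v.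
have hP : forall i j, i \in filter p s -> j \in filter p s ->
   fiter a c r (x i) = fiter a c r (x j).
  by move=> i j; rewrite !mem_filter => /andP[/eqP -> _] /andP[/eqP -> _].
have Qv : forall i, i \in filter (predC p) s -> fiter a c r (x i) = - v.
  move=> i; rewrite mem_filter => /andP[/= hn hi].
  have := hs i x0 hi (mem_head _ _); rewrite /fiter !iterS -/(fiter _ _ _ _) => /quad_eq [].
    by move=> h; rewrite /p h eqxx in hn.
  by [].
have hQ : forall i j, i \in filter (predC p) s -> j \in filter (predC p) s ->
   fiter a c r (x i) = fiter a c r (x j).
  by move=> i j /Qv -> /Qv ->.
have [tP [dP [pP bP phP mP]]] := IH _ hP.
have [tQ [dQ [pQ bQ phQ mQ]]] := IH _ hQ.
have inP : forall i, i \in tP -> fiter a c r (x i) = v.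
  by move=> i; rewrite -(perm_mem pP) mem_filter => /andP[/eqP].
have inQ : forall i, i \in tQ -> fiter a c r (x i) = - v.
  by move=> i; rewrite -(perm_mem pQ) => /Qv.
set nP := size tP; set nQ := size tQ.
have nP0 : (0 < nP)%N.
  have : x0 \in tP by rewrite -(perm_mem pP) mem_filter /p eqxx mem_head.
  by rewrite /nP; case: (tP).
pose d := fun i : nat => if (i.+1 < nP)%N then dP i else if i == nP.-1 then r%:Z
                         else dQ (i - nP)%N.
exists (tP ++ tQ), d; rewrite size_cat -/nP -/nQ; split.
- rewrite -(perm_filterC p s) perm_cat //.
- move=> i hi; rewrite /d; case: ifP => h1; first by have := bP i h1; lia.
  case: eqP => h2; first lia.
  have := bQ (i - nP)%N ltac:(lia); lia.
- move=> i hi; rewrite /d !nth_cat -/nP.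
  case: (ltnP i.+1 nP) => h1.
    have -> : (i < nP)%N by lia. exact: phP.
  case: (eqVneq i nP.-1) => h2.
    have -> : (i < nP)%N by lia.
    have -> : (i.+1 - nP = 0)%N by lia.
    rewrite /phi inP ?inQ ?subrr //; apply: mem_nth; lia.
  have -> : (i < nP)%N = false by lia.
  have -> : (i.+1 - nP = (i - nP).+1)%N by lia.
  apply: phQ; lia.
- move=> s1 t1 hst ht.
  case: (ltnP t1.+1 nP) => h1.
    apply: (@mx_ext dP); last exact: mP.
    by move=> i hi; rewrite /d; have -> : (i.+1 < nP)%N by lia.
  case: (leqP nP s1) => h2.
    have := @mx_shift dQ nP _ _ (mQ (s1 - nP)%N (t1 - nP)%N ltac:(lia) ltac:(lia)).
    rewrite !subnK; try lia.
    apply: mx_ext => i hi; rewrite /d; have -> : (i.+1 < nP)%N = false by lia.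
    have -> : (i == nP.-1) = false by lia. by [].
  right; exists nP.-1; split; first lia.
  move=> i hi hne; rewrite /d; have -> : (nP.-1.+1 < nP)%N = false by lia. rewrite eqxx.
  case: ifP => h3; first by have := bP i h3; lia.
  have -> : (i == nP.-1) = false by lia.
  have := bQ (i - nP)%N ltac:(lia); lia.
Qed.

End Aux.

Theorem lemma5 (F : finFieldType) (L : closedFieldType)
    (iota : {rmorphism F -> L})
    (hchar : 2%N \notin [pchar F])
    (a c : F) (ha : a != 0) (r k : nat) (hr : (1 <= r)%N) (hk : (2 <= k)%N)
    (x : 'I_k -> L)
    (halg : forall i : 'I_k, exists2 p : {poly F}, p != 0 &
              root (map_poly iota p) (x i))
    (heq : forall i j : 'I_k,
        fiter (iota a) (iota c) r (x i) = fiter (iota a) (iota c) r (x j)) :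
  exists (sigma : 'S_k) (d : nat -> int),
    (forall i : nat, (i.+1 < k)%N -> -1 <= d i <= (r.-1)%:Z) /\
    (forall i j : 'I_k, nat_of_ord j = (nat_of_ord i).+1 ->
        phi (iota a) (iota c) (x (sigma i)) (x (sigma j)) (d i) = 0) /\
    (forall s t : nat, (s < t)%N -> (t.+1 < k)%N -> max_neg1_or_unique d s t).
Proof.
have ha' : iota a != 0 by rewrite fmorph_eq0.
have k0 : (0 < k)%N by lia.
pose i0 := Ordinal k0.
have [t [d [pt bt pht mt]]] :=
  @main _ _ _ ha' _ i0 x r (enum 'I_k) (fun i j _ _ => heq i j).
have st : size t = k by rewrite -(perm_size pt) size_enum_ord.
have ut : uniq t by rewrite -(perm_uniq pt) enum_uniq.
pose g := fun i : 'I_k => nth i0 t i.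
have ginj : injective g.
  move=> i j /eqP; rewrite /g nth_uniq ?st // => /eqP; exact: val_inj.
exists (perm ginj), d; split; last split.
- move=> i hi; have := bt i ltac:(by rewrite st); case: (r) hr => // r' _ /=.
  by rewrite -addn1 PoszD addrK.
- move=> i j hij; rewrite !permE /g hij; apply: pht; rewrite st -hij; exact: ltn_ord.
- move=> s1 t1 h1 h2; rewrite -st in h2; exact: (mt s1 t1 h1 h2).
Qed.
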